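(* Let $G=(V,E)$ be a simple directed graph and $f\ge 0$ an integer. Then: (a) $G$ satisfies Condition CCS if and only if $G$ satisfies the 1-reach condition; (b) $G$ satisfies Condition CCA if and only if $G$ satisfies the 2-reach condition; (c) $G$ satisfies Condition BCS if and only if $G$ satisfies the 3-reach condition.
   Context: For $Y\subseteq V$, $G_Y$ is the subgraph induced by $Y$ and $\overline{X}=V\setminus X$. For node $v$ and $F\subseteq V\setminus\{v\}$, $reach_v(F)=\{u\in\overline{F}: u\text{ has a directed path to }v\text{ in }G_{\overline{F}}\}$. For disjoint non-empty $A,B\subseteq V$, a node $w\notin B$ is an incoming neighbor of $B$ if $(w,b)\in E$ for some $b\in B$; write $A\Rightarrow_x B$ if $A$ contains at least $x$ distinct incoming neighbors of $B$, and $A\not\Rightarrow_x B$ for its negation. Condition CCS: for any partition $F,L,C,R$ of $V$ with $L,R$ non-empty and $|F|\le f$, $L\cup C\Rightarrow_1 R$ or $R\cup C\Rightarrow_1 L$. Condition CCA: for any partition $L,C,R$ of $V$ with $L,R$ non-empty, $L\cup C\Rightarrow_{f+1} R$ or $R\cup C\Rightarrow_{f+1} L$. Condition BCS: for any partition $F,L,C,R$ of $V$ with $L,R$ non-empty and $|F|\le f$, $L\cup C\Rightarrow_{f+1} R$ or $R\cup C\Rightarrow_{f+1} L$. 1-reach: for any $F\subset V$ with $|F|\le f$ and any $u,v\in\overline{F}$, $reach_u(F)\cap reach_v(F)\neq\emptyset$. 2-reach: for any $u,v\in V$ and any $F_u,F_v\subseteq V$ with $|F_u|,|F_v|\le f$,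 $u\notin F_u$, $v\notin F_v$, $reach_v(F_v)\cap reach_u(F_u)\neq\emptyset$. 3-reach: for any $u,v\in V$ and any $F,F_u,F_v\subseteq V$ with $|F|,|F_u|,|F_v|\le f$, $u\notin F\cup F_u$, $v\notin F\cup F_v$, $reach_v(F\cup F_v)\cap reach_u(F\cup F_u)\neq\emptyset$. *)

(* Defs.v *)
From mathcomp Require Import all_boot.
Set Implicit Arguments. Unset Strict Implicit. Unset Printing Implicit Defensive.

(* A directed graph G = (V,E): V is a finite type T, E is the relation e
   ((w,b) \in E  <->  e w b).  "Simple" = no self-loops (irreflexive e). *)

Section Defs.
Variables (T : finType) (e : rel T).

Definition induced_rel (F : {set T}) : rel T :=
  fun x y => [&& e x y, x \notin F & y \notin F].

Definition reach (v : T) (F : {set T}) : {set T} :=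
  [set u | (u \notin F) && connect (induced_rel F) u v].

Definition in_nbrs (B : {set T}) : {set T} :=
  [set w | (w \notin B) && [exists b in B, e w b]].

Definition arrow (A B : {set T}) (x : nat) : bool := x <= #|A :&: in_nbrs B|.

Definition partition3 (L C R : {set T}) : Prop :=
  [/\ L :|: C :|: R = setT, [disjoint L & C], [disjoint L & R] & [disjoint C & R]].

Definition partition4 (F L C R : {set T}) : Prop :=
  [/\ F :|: L :|: C :|: R = setT,
      [/\ [disjoint F & L], [disjoint F & C] & [disjoint F & R]] &
      [/\ [disjoint L & C], [disjoint L & R] & [disjoint C & R]]].

Definition condCCS (f : nat) : Prop :=
  forall F L C R : {set T}, partition4 F L C R -> L != set0 -> R != set0 ->
    #|F| <= f -> arrow (L :|: C) R 1 \/ arrow (R :|: C) L 1.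

Definition condCCA (f : nat) : Prop :=
  forall L C R : {set T}, partition3 L C R -> L != set0 -> R != set0 ->
    arrow (L :|: C) R f.+1 \/ arrow (R :|: C) L f.+1.

Definition condBCS (f : nat) : Prop :=
  forall F L C R : {set T}, partition4 F L C R -> L != set0 -> R != set0 ->
    #|F| <= f -> arrow (L :|: C) R f.+1 \/ arrow (R :|: C) L f.+1.

Definition reach1 (f : nat) : Prop :=
  forall (F : {set T}) (u v : T), F \proper setT -> #|F| <= f ->
    u \notin F -> v \notin F -> reach u F :&: reach v F != set0.

Definition reach2 (f : nat) : Prop :=
  forall (u v : T) (Fu Fv : {set T}), #|Fu| <= f -> #|Fv| <= f ->
    u \notin Fu -> v \notin Fv -> reach v Fv :&: reach u Fu != set0.

Definition reach3 (f : nat) : Prop :=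
  forall (u v : T) (F Fu Fv : {set T}), #|F| <= f -> #|Fu| <= f -> #|Fv| <= f ->
    u \notin F :|: Fu -> v \notin F :|: Fv ->
    reach v (F :|: Fv) :&: reach u (F :|: Fu) != set0.

End Defs.

(* Main.v *)
Require Import Defs.
From mathcomp Require Import all_boot.

Set Implicit Arguments. Unset Strict Implicit.
Section Aux.
Variables (T : finType) (e : rel T).

Lemma disjP (A B : {set T}) x : [disjoint A & B] -> x \in A -> x \in B -> False.
Proof. move=> D xA xB; move: D; rewrite -setI_eq0 => /eqP/setP/(_ x); by rewrite !inE xA xB. Qed.

Lemma mkdisj (A B : {set T}) : (forall x, x \in A -> x \in B -> False) -> [disjoint A & B].
Proof. move=> H; rewrite -setI_eq0; apply/eqP/setP => x; rewrite !inE; apply/negP => /andP[]; exact: H. Qed.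

Lemma reach_closed (F S : {set T}) v : v \in S ->
  (forall w x, w \notin F -> x \notin F -> e w x -> x \in S -> w \in S) ->
  reach e v F \subset S.
Proof.
move=> vS H; apply/subsetP => u; rewrite inE => /andP[uF /connectP [p pth lst]].
elim: p u uF pth lst => [|y p IH] u uF /=; first by move=> _ <-.
case/andP => /and3P[euy _ yF] pth lst.
apply: (H u y) => //; exact: IH.
Qed.

Lemma reach_pred v (F : {set T}) w r : w \notin F -> e w r -> r \in reach e v F -> w \in reach e v F.
Proof.
rewrite !inE => wF ewr /andP[rF c]; rewrite wF /=.
apply: connect_trans c; apply: connect1; by rewrite /induced_rel ewr wF rF.
Qed.

Lemma in_reach v (F : {set T}) : v \notin F -> v \in reach e v F.
Proof. by rewrite inE => ->; rewrite connect0. Qed.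

Lemma reach_notin x v (F : {set T}) : x \in reach e v F -> x \notin F.
Proof. by rewrite inE => /andP[]. Qed.

Lemma nbrs_reach v (F : {set T}) : in_nbrs e (reach e v F) \subset F.
Proof.
apply/subsetP => w; rewrite inE => /andP[wR /existsP[r /andP[rR ewr]]].
apply/negPn/negP => wF; by rewrite (reach_pred wF ewr rR) in wR.
Qed.

Lemma reach_sub (L Fu : {set T}) u : in_nbrs e L \subset Fu -> u \in L -> reach e u Fu \subset L.
Proof.
move=> HN uL; apply: reach_closed => // w x wF xF ewx xL.
apply/negPn/negP => wL.
have : w \in in_nbrs e L by rewrite inE wL /=; apply/existsP; exists x; rewrite xL.
move/(subsetP HN); by rewrite (negbTE wF).
Qed.

Lemma core1 (L R Fu Fv : {set T}) u v : in_nbrs e L \subset Fu -> in_nbrs e R \subset Fv ->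
  u \in L -> v \in R -> [disjoint L & R] -> reach e u Fu :&: reach e v Fv == set0.
Proof.
move=> HL HR uL vR D.
apply/eqP/setP => x; rewrite in_setI in_set0; apply/negbTE/negP => /andP[xu xv].
exact: (disjP D (subsetP (reach_sub HL uL) x xu) (subsetP (reach_sub HR vR) x xv)).
Qed.

Lemma part4_mem (F L C R : {set T}) x : partition4 F L C R -> [|| x \in F, x \in L, x \in C | x \in R].
Proof. case=> U _ _; move/setP/(_ x): U; rewrite !inE -!orbA => ->. done. Qed.

Lemma part4_sym (F L C R : {set T}) : partition4 F L C R -> partition4 F R C L.
Proof.
case=> U [dFL dFC dFR] [dLC dLR dCR]; split; [|split|split].
- apply/setP => x; move/setP/(_ x): U; rewrite !inE.
  by case: (x \in F); case: (x \in L); case: (x \in C); case: (x \in R).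
all: try done.
all: by rewrite disjoint_sym.
Qed.

Lemma part3_4 (L C R : {set T}) : partition3 L C R -> partition4 set0 L C R.
Proof.
case=> U d1 d2 d3; split; [|split|split] => //.
- by rewrite !set0U.
all: by apply: mkdisj => x; rewrite inE.
Qed.

Lemma part4_3 (L C R : {set T}) : partition4 set0 L C R -> partition3 L C R.
Proof. case=> U _ [d1 d2 d3]; split => //; by rewrite !set0U in U. Qed.

Lemma nbrs_in_part (F L C R : {set T}) : partition4 F L C R ->
  in_nbrs e L \subset F :|: ((R :|: C) :&: in_nbrs e L).
Proof.
move=> P; apply/subsetP => w wN.
have := wN; rewrite inE => /andP[wL _].
rewrite in_setU in_setI in_setU wN andbT.
case/or4P: (part4_mem w P) => H; try by rewrite H ?orbT.
by rewrite H in wL.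
Qed.

Lemma build (A L R : {set T}) : [disjoint A & L] -> [disjoint A & R] -> [disjoint L & R] ->
  partition4 A L (~: (A :|: L :|: R)) R.
Proof.
move=> d1 d2 d3; split; [|split|split] => //.
- apply/setP => x; rewrite !inE.
  by case: (x \in A); case: (x \in L); case: (x \in R).
all: apply: mkdisj => x; rewrite !inE.
all: by case: (x \in A); case: (x \in L); case: (x \in R).
Qed.

Lemma nbrs_bound (A L C R Fv : {set T}) : partition4 A L C R -> in_nbrs e R \subset Fv ->
  (L :|: C) :&: in_nbrs e R \subset Fv :\: A.
Proof.
case=> _ [dAL dAC _] _ H; apply/subsetP => x; rewrite in_setI in_setD => /andP[xLC xN].
rewrite (subsetP H x xN) andbT; apply/negP => xA.
case/setUP: xLC => [xL|xC]; [exact: (disjP dAL xA xL) | exact: (disjP dAC xA xC)].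
Qed.

Lemma arrow1F (A B : {set T}) : ~~ arrow e A B 1 -> A :&: in_nbrs e B = set0.
Proof. by rewrite /arrow card_gt0 negbK => /eqP. Qed.

Lemma arrowF (A B : {set T}) f : ~~ arrow e A B f.+1 -> #|A :&: in_nbrs e B| <= f.
Proof. by rewrite /arrow -ltnNge ltnS. Qed.

Lemma notin_nbrs u (L : {set T}) : u \in L -> u \notin in_nbrs e L.
Proof. by move=> uL; rewrite inE uL. Qed.

Lemma part_disj (F L C R : {set T}) u : partition4 F L C R -> u \in L -> u \notin F.
Proof. by case=> _ [d _ _] _ uL; apply/negP => uF; exact: (disjP d uF uL). Qed.

Lemma part_LR (F L C R : {set T}) : partition4 F L C R -> [disjoint L & R].
Proof. by case=> _ _ []. Qed.

End Aux.

Theorem theoremA8 (T : finType) (e : rel T) (f : nat) :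
  irreflexive e ->
  [/\ condCCS e f <-> reach1 e f,
      condCCA e f <-> reach2 e f &
      condBCS e f <-> reach3 e f].
Proof.
move=> _; split; split.
- move=> H F u v _ cF uF vF; apply/negP => /eqP E.
  have dLR : [disjoint reach e u F & reach e v F] by rewrite -setI_eq0 E.
  have dL : [disjoint F & reach e u F].
    by apply: mkdisj => x xF /reach_notin; rewrite xF.
  have dR : [disjoint F & reach e v F].
    by apply: mkdisj => x xF /reach_notin; rewrite xF.
  have P := build dL dR dLR.
  have nL : reach e u F != set0 by apply/set0Pn; exists u; exact: in_reach.
  have nR : reach e v F != set0 by apply/set0Pn; exists v; exact: in_reach.
  case: (H _ _ _ _ P nL nR cF); rewrite /arrow card_gt0 => /set0Pn [x].
  + move/(subsetP (nbrs_bound P (nbrs_reach e v F))); by rewrite in_setD; case: (x \in F).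
  + move/(subsetP (nbrs_bound (part4_sym P) (nbrs_reach e u F))); by rewrite in_setD; case: (x \in F).
- move=> H F L C R P nL nR cF.
  case A1: (arrow e (L :|: C) R 1); first by left.
  case A2: (arrow e (R :|: C) L 1); first by right.
  exfalso; case/set0Pn: nL => u uL; case/set0Pn: nR => v vR.
  have uF := part_disj P uL.
  have vF := part_disj (part4_sym P) vR.
  have NL := nbrs_in_part e P; rewrite (arrow1F (negbT A2)) setU0 in NL.
  have NR := nbrs_in_part e (part4_sym P); rewrite (arrow1F (negbT A1)) setU0 in NR.
  have FT : F \proper setT by rewrite properT; apply/negP => /eqP FT; rewrite FT inE in uF.
  have := H F u v FT cF uF vF; by rewrite (core1 NL NR uL vR (part_LR P)).
- move=> H u v Fu Fv cu cv uF vF; apply/negP => /eqP E; rewrite setIC in E.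
  have dLR : [disjoint reach e u Fu & reach e v Fv] by rewrite -setI_eq0 E.
  have dL : [disjoint set0 & reach e u Fu] by apply: mkdisj => x; rewrite inE.
  have dR : [disjoint set0 & reach e v Fv] by apply: mkdisj => x; rewrite inE.
  have P4 := build dL dR dLR.
  have P := part4_3 P4.
  have nL : reach e u Fu != set0 by apply/set0Pn; exists u; exact: in_reach.
  have nR : reach e v Fv != set0 by apply/set0Pn; exists v; exact: in_reach.
  case: (H _ _ _ P nL nR); rewrite /arrow => Hc.
  + have := leq_trans Hc (subset_leq_card (nbrs_bound P4 (nbrs_reach e v Fv))).
    rewrite setD0 => /leq_trans/(_ cv); by rewrite ltnn.
  + have := leq_trans Hc (subset_leq_card (nbrs_bound (part4_sym P4) (nbrs_reach e u Fu))).
    rewrite setD0 => /leq_trans/(_ cu); by rewrite ltnn.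
- move=> H L C R P3 nL nR.
  have P := part3_4 P3.
  case A1: (arrow e (L :|: C) R f.+1); first by left.
  case A2: (arrow e (R :|: C) L f.+1); first by right.
  exfalso; case/set0Pn: nL => u uL; case/set0Pn: nR => v vR.
  have NL := nbrs_in_part e P; rewrite set0U in NL.
  have NR := nbrs_in_part e (part4_sym P); rewrite set0U in NR.
  have uF : u \notin (R :|: C) :&: in_nbrs e L by rewrite in_setI (negbTE (notin_nbrs e uL)) andbF.
  have vF : v \notin (L :|: C) :&: in_nbrs e R by rewrite in_setI (negbTE (notin_nbrs e vR)) andbF.
  have := H u v _ _ (arrowF (negbT A2)) (arrowF (negbT A1)) uF vF.
  by rewrite setIC (core1 NL NR uL vR (part_LR P)).
- move=> H u v F Fu Fv cF cu cv uF vF; apply/negP => /eqP E; rewrite setIC in E.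
  have dLR : [disjoint reach e u (F :|: Fu) & reach e v (F :|: Fv)] by rewrite -setI_eq0 E.
  have dL : [disjoint F & reach e u (F :|: Fu)].
    by apply: mkdisj => x xF /reach_notin; rewrite inE xF.
  have dR : [disjoint F & reach e v (F :|: Fv)].
    by apply: mkdisj => x xF /reach_notin; rewrite inE xF.
  have P := build dL dR dLR.
  have nL : reach e u (F :|: Fu) != set0 by apply/set0Pn; exists u; exact: in_reach.
  have nR : reach e v (F :|: Fv) != set0 by apply/set0Pn; exists v; exact: in_reach.
  have sub : forall X : {set T}, (F :|: X) :\: F \subset X.
    by move=> X; apply/subsetP => x; rewrite !inE; case: (x \in F).
  case: (H _ _ _ _ P nL nR cF); rewrite /arrow => Hc.
  + have := leq_trans Hc (subset_leq_card (subset_trans (nbrs_bound P (nbrs_reach e v _)) (sub Fv))).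
    move=> /leq_trans/(_ cv); by rewrite ltnn.
  + have := leq_trans Hc (subset_leq_card (subset_trans (nbrs_bound (part4_sym P) (nbrs_reach e u _)) (sub Fu))).
    move=> /leq_trans/(_ cu); by rewrite ltnn.
- move=> H F L C R P nL nR cF.
  case A1: (arrow e (L :|: C) R f.+1); first by left.
  case A2: (arrow e (R :|: C) L f.+1); first by right.
  exfalso; case/set0Pn: nL => u uL; case/set0Pn: nR => v vR.
  have NL := nbrs_in_part e P.
  have NR := nbrs_in_part e (part4_sym P).
  have uF : u \notin F :|: (R :|: C) :&: in_nbrs e L.
    by rewrite in_setU in_setI (negbTE (notin_nbrs e uL)) andbF orbF (part_disj P uL).
  have vF : v \notin F :|: (L :|: C) :&: in_nbrs e R.
    by rewrite in_setU in_setI (negbTE (notin_nbrs e vR)) andbF orbF (part_disj (part4_sym P) vR).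
  have := H u v F _ _ cF (arrowF (negbT A2)) (arrowF (negbT A1)) uF vF.
  by rewrite setIC (core1 NL NR uL vR (part_LR P)).
Qed.
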